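(* Consider the minimum weight bipartite matching problem for two multisets $R,B$ of $n$ points each in the $d$-dimensional Boolean hypercube $Q_d$ with the $\ell_1$ metric, and suppose the instance is $(d^{3/4},d^{3/4})$-bounded. Then the greedy algorithm achieves an approximation factor of $o(d^{3/4})$, i.e., the weight of the greedy matching is at most $o(d^{3/4})$ times the weight of a minimum weight perfect matching.
   Context: An instance is $(\eta,\zeta)$-bounded if all points of $R\cup B$ can be covered by $\eta$ $\ell_1$-balls of radius $\zeta$ lying within $Q_d$. The greedy algorithm repeatedly matches a pair of currently unmatched points $r\in R$, $b\in B$ at minimum $\ell_1$ distance among all unmatched pairs (ties broken arbitrarily). The weight of a matching is the sum of the $\ell_1$ lengths of its edges. Asymptotics are as $d\to\infty$. *)

(* Defs.v *)
From mathcomp Require Import all_boot all_order all_algebra all_fingroup.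
From mathcomp Require Import all_classical all_reals all_analysis.
Set Implicit Arguments. Unset Strict Implicit. Unset Printing Implicit Defensive.
Import Order.TTheory GRing.Theory Num.Theory.
Local Open Scope ring_scope.

Definition cube (d : nat) := {ffun 'I_d -> bool}.

(* The l1 distance on Q_d (= Hamming distance). *)
Definition dist1 (d : nat) (x y : cube d) : nat := #|[set i | x i != y i]|.

(* A perfect matching between R and B (n points each, multisets given as
   indexed families) is a permutation s : R i is matched to B (s i). *)
Definition mweight (d n : nat) (R B : 'I_n -> cube d) (s : 'S_n) : nat :=
  (\sum_(i < n) dist1 (R i) (B (s i)))%N.

Definition is_min_matching (d n : nat) (R B : 'I_n -> cube d) (s : 'S_n) :=
  forall s' : 'S_n, (mweight R B s <= mweight R B s')%N.

(* s is an output of the greedy algorithm (with some tie-breaking): there is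
   an order tau in which the pairs (R (tau k), B (s (tau k))) are matched,
   and at each step k the matched pair has minimum distance among all pairs
   of still unmatched points. *)
Definition is_greedy_matching (d n : nat) (R B : 'I_n -> cube d) (s : 'S_n) :=
  exists tau : 'S_n, forall (k i j : 'I_n),
    (forall l : 'I_n, (l < k)%N -> tau l != i) ->
    (forall l : 'I_n, (l < k)%N -> s (tau l) != j) ->
    (dist1 (R (tau k)) (B (s (tau k))) <= dist1 (R i) (B j))%N.

Definition bounded_instance (Rl : realType) (d n : nat) (eta zeta : Rl)
    (R B : 'I_n -> cube d) :=
  exists (m : nat) (c : 'I_m -> cube d),
    (m%:R <= eta) /\
    (forall i : 'I_n, exists k : 'I_m, (dist1 (R i) (c k))%:R <= zeta) /\
    (forall j : 'I_n, exists k : 'I_m, (dist1 (B j) (c k))%:R <= zeta).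

(* Main.v *)
Require Import Defs.
From mathcomp Require Import all_boot all_order all_algebra all_fingroup.
From mathcomp Require Import all_classical all_reals all_analysis.
From mathcomp Require Import zify ring lra.
Import Order.TTheory GRing.Theory Num.Theory numFieldNormedType.Exports.
Local Open Scope nat_scope.

Lemma dist1C d (x y : cube d) : dist1 x y = dist1 y x.
Proof. by rewrite /dist1; apply: eq_card => i; rewrite !inE eq_sym. Qed.

Lemma dist1_tri d (x y z : cube d) : dist1 x z <= dist1 x y + dist1 y z.
Proof.
have sub : [set i | x i != z i] \subset
  [set i | x i != y i] :|: [set i | y i != z i].
  apply/fintype.subsetP => i; rewrite !inE.
  by case: (x i); case: (y i); case: (z i).
rewrite /dist1; apply: leq_trans (subset_leq_card sub) _.
by rewrite cardsU leq_subr.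
Qed.

Lemma dist1_le d (x y : cube d) : dist1 x y <= d.
Proof. by apply: leq_trans (max_card _) _; rewrite card_ord. Qed.

Definition time {n} (tau : 'S_n) (i : 'I_n) : nat := val ((tau^-1)%g i).

Lemma greedyP d n (R B : 'I_n -> cube d) (sg tau : 'S_n)
 (H : forall k i j : 'I_n, (forall l : 'I_n, l < k -> tau l != i) ->
    (forall l : 'I_n, l < k -> sg (tau l) != j) ->
    dist1 (R (tau k)) (B (sg (tau k))) <= dist1 (R i) (B j))
 i0 i j : time tau i0 <= time tau i -> time tau i0 <= time tau ((sg^-1)%g j) ->
 dist1 (R i0) (B (sg i0)) <= dist1 (R i) (B j).
Proof.
move=> h1 h2; have := H ((tau^-1)%g i0) i j; rewrite permKV; apply.
- move=> l hl; apply/eqP=> e; move: h1; rewrite /time -e permK.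
  by rewrite leqNgt hl.
- move=> l hl; apply/eqP=> e; move: h2; rewrite /time -e !permK.
  by rewrite leqNgt hl.
Qed.
Arguments greedyP {d n R B sg tau}.

Lemma sum_split (F : nat -> nat) j N : j <= N ->
  \sum_(a < N) F a = \sum_(a < j) F a + \sum_(a < N - j) F (a + j).
Proof.
move=> hj; rewrite -!(big_mkord xpredT) (big_cat_nat (leq0n j) hj) /=.
rewrite -[in X in _ + X](add0n j) big_addn.
by rewrite !big_mkord.
Qed.

Lemma exmax (f : nat -> nat) m : 0 < m ->
  exists2 j, 0 < j <= m & forall a, 0 < a <= m -> f a <= f j.
Proof.
elim: m => // m IH _; case: m IH => [|m] IH.
  by exists 1 => // a /andP[a0 a1]; have -> : a = 1 by lia.
case: (IH isT) => j hj hmax; case: (leqP (f m.+2) (f j)) => h.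
  exists j; first by lia.
  move=> a /andP[a0]; rewrite leq_eqVlt ltnS => /orP[/eqP->//|a1].
  by apply: hmax; rewrite a0 a1.
exists m.+2; first by rewrite /= leqnn.
move=> a /andP[a0]; rewrite leq_eqVlt ltnS => /orP[/eqP->//|a1].
by apply: leq_trans (ltnW h); apply: hmax; rewrite a0 a1.
Qed.

Definition greedy_spec {d n} (R B : 'I_n -> cube d) (sg tau : 'S_n) :=
  forall k i j : 'I_n, (forall l : 'I_n, l < k -> tau l != i) ->
    (forall l : 'I_n, l < k -> sg (tau l) != j) ->
    dist1 (R (tau k)) (B (sg (tau k))) <= dist1 (R i) (B j).

Lemma path_bound d n (R B : 'I_n -> cube d) (sg so tau : 'S_n)
  (H : greedy_spec R B sg tau) m :
  forall x0 T, T <= time tau x0 ->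
  T <= time tau (iter m.+1 (so * sg^-1)%g x0) ->
  (forall a, 0 < a <= m -> time tau (iter a (so * sg^-1)%g x0) <= T) ->
  dist1 (R x0) (B (so (iter m (so * sg^-1)%g x0))) <=
  (\sum_(a < m.+1) dist1 (R (iter a (so * sg^-1)%g x0))
                         (B (so (iter a (so * sg^-1)%g x0))))^2.
Proof.
set phi := (so * sg^-1)%g.
have phiE x : phi x = (sg^-1)%g (so x) by rewrite permM.
set o := fun x => dist1 (R x) (B (so x)).
elim/ltn_ind: m => m IH x0 T h0 hend hmid.
case: m IH hend hmid => [|m] IH hend hmid.
  rewrite big_ord1 /=; set u := dist1 _ _; nia.
have [j hj hmax] := exmax (fun a => time tau (iter a phi x0)) m.+1 (ltn0Sn m).
set T' := time tau (iter j phi x0).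
have hT' : T' <= T by apply: hmid.
have jE : (j.-1).+1 = j by lia.
have P1 := IH j.-1 ltac:(lia) x0 T' ltac:(lia).
rewrite jE in P1.
have {}P1 := P1 (leqnn _) ltac:(move=> a ha; apply: hmax; lia).
have P2 := IH (m.+1 - j) ltac:(lia) (iter j phi x0) T' (leqnn _).
rewrite -iterD in P2.
have e2 : (m.+1 - j).+1 + j = m.+2 by lia.
rewrite e2 in P2.
have {}P2 := P2 ltac:(lia).
have e3 : m.+1 - j + j = m.+1 by lia.
rewrite -iterD e3 in P2.
have {}P2 : dist1 (R (iter j phi x0)) (B (so (iter m.+1 phi x0))) <=
   (\sum_(a < (m.+1 - j).+1) o (iter (a + j) phi x0))^2.
  have P2' := P2 ltac:(move=> a ha; rewrite -iterD; apply: hmax; lia).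
  apply: (leq_trans P2' _).
  rewrite leq_exp2r //; apply: eq_leq; apply: eq_bigr => a _.
  by rewrite /o iterD.
have eS : \sum_(a < m.+2) dist1 (R (iter a phi x0)) (B (so (iter a phi x0)))
   = \sum_(a < j) o (iter a phi x0)
     + \sum_(a < (m.+1 - j).+1) o (iter (a + j) phi x0).
  rewrite (@sum_split (fun a => o (iter a phi x0)) j m.+2); last by lia.
  by have -> : m.+2 - j = (m.+1 - j).+1 by lia.
rewrite eS.
set xj := iter j phi x0.
have sgxj : sg xj = so (iter j.-1 phi x0).
  by rewrite /xj -jE iterS phiE permKV.
set l := dist1 (R xj) (B (sg xj)).
have l1 : l <= dist1 (R x0) (B (so (iter j.-1 phi x0))).
  rewrite -sgxj; apply: (greedyP H); first by rewrite -/T'; lia.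
  by rewrite permK.
have l2 : l <= dist1 (R xj) (B (so (iter m.+1 phi x0))).
  apply: (greedyP H) => //.
  rewrite -phiE -iterS; rewrite -/T'; lia.
have tri : dist1 (R x0) (B (so (iter m.+1 phi x0))) <=
   dist1 (R x0) (B (so (iter j.-1 phi x0))) + l +
   dist1 (R xj) (B (so (iter m.+1 phi x0))).
  apply: leq_trans (@dist1_tri _ _ (B (sg xj)) _) _.
  rewrite -sgxj -addnA leq_add2l.
  apply: leq_trans (@dist1_tri _ _ (R xj) _) _.
  by rewrite dist1C.
move: P1 P2 l1 l2 tri.
set D1 := dist1 (R x0) _; set D2 := dist1 (R xj) _; set D := dist1 _ _.
set A1 := \sum_(a < j) _; set A2 := \sum_(a < _) _.
move=> P1 P2 l1 l2 tri.
have : l <= A1 * A2 by case: (leqP A1 A2) => h; nia.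
nia.
Qed.
Definition mS {n} (phi : 'S_n) (S : {set 'I_n}) x0 :=
  find (fun b => iter b.+1 phi x0 \in S) (iota 0 #[phi]%g).

Lemma mS_spec n (phi : 'S_n) (S : {set 'I_n}) x0 : x0 \in S ->
  [/\ mS phi S x0 < #[phi]%g, iter (mS phi S x0).+1 phi x0 \in S &
      forall a, 0 < a <= mS phi S x0 -> iter a phi x0 \notin S].
Proof.
move=> hx0; set N := #[phi]%g.
have hN : 0 < N by apply: order_gt0.
have hh : has (fun b => iter b.+1 phi x0 \in S) (iota 0 N).
  apply/hasP; exists N.-1; first by rewrite mem_iota; lia.
  by rewrite prednK // -permX expg_order perm1.
have hlt : mS phi S x0 < N by move: hh; rewrite has_find size_iota.
split => //.
  by have := nth_find 0 hh; rewrite nth_iota // add0n.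
move=> a ha; have hb : a.-1 < mS phi S x0 by lia.
have := @before_find _ 0 (fun b => iter b.+1 phi x0 \in S) (iota 0 N) a.-1 hb.
rewrite nth_iota /=; last by lia.
rewrite add0n -iterS prednK; last by lia.
by move->.
Qed.
Arguments mS_spec {n phi S x0}.

Lemma seg_sum n (phi : 'S_n) (S : {set 'I_n}) (o : 'I_n -> nat) :
  \sum_(x0 in S) \sum_(a < (mS phi S x0).+1) o (iter a phi x0) <= \sum_i o i.
Proof.
set N := #[phi]%g.
have e : forall x0, x0 \in S -> \sum_(a < (mS phi S x0).+1) o (iter a phi x0)
   = \sum_(a < N | a < (mS phi S x0).+1) o (iter a phi x0).
  move=> x0 hx0; have [h1 _ _] := mS_spec (phi:=phi) hx0.
  by rewrite (big_ord_widen N (fun a => o (iter a phi x0)) h1).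
rewrite (eq_bigr _ e) pair_big_dep /=.
set P := [set p : 'I_n * 'I_N | (p.1 \in S) && (p.2 < (mS phi S p.1).+1)].
set g := fun p : 'I_n * 'I_N => iter p.2 phi p.1.
have -> : \sum_(p : 'I_n * 'I_N | (p.1 \in S) && (p.2 < (mS phi S p.1).+1)) o (iter p.2 phi p.1)
   = \sum_(p in P) o (g p) by apply: eq_bigl => p; rewrite inE.
have claim : forall p q, p \in P -> q \in P -> p.2 <= q.2 -> g p = g q -> p = q.
  move=> [p1 p2] [q1 q2]; rewrite !inE /g /= => /andP[hp1 hp2] /andP[hq1 hq2] hle.
  have eq2 : q2 = (q2 - p2) + p2 :> nat by lia.
  rewrite [in iter q2 _ _]eq2 iterD => e0.
  have e1 : p1 = iter (q2 - p2) phi q1.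
    apply: (@perm_inj _ (phi ^+ p2)%g); rewrite !permX.
    by rewrite e0 -!iterD addnC.
  have [_ _ hnot] := mS_spec (phi:=phi) hq1.
  case: (posnP (q2 - p2)) => hc.
    rewrite hc /= in e1; rewrite e1; congr pair; apply: val_inj => /=; lia.
  by move: hp1; rewrite e1 (negbTE (hnot _ _)) //; rewrite hc /=; lia.
have ginj : {in P &, injective g}.
  move=> p q hp hq e'; case: (leqP p.2 q.2) => h; first exact: claim.
  by apply/esym/claim => //; apply: ltnW.
rewrite -(big_imset _ ginj) /= big_mkcond /=.
by apply: leq_sum => i _; case: ifP.
Qed.

Lemma count_bound d n (R B : 'I_n -> cube d) (sg so tau : 'S_n)
  (H : greedy_spec R B sg tau) t a :
  (forall A, t <= A ^ 2 -> a <= A) ->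
  #|[set i | t <= dist1 (R i) (B (sg i))]| * a <= \sum_i dist1 (R i) (B (so i)).
Proof.
move=> hA; set C := [set i | _].
case: (set_0Vmem C) => [->|[i1 hi1]]; first by rewrite cards0.
have [i0 hi0 hmin] := arg_minnP (time tau) hi1.
set phi := (so * sg^-1)%g.
have phiE x : phi x = (sg^-1)%g (so x) by rewrite permM.
set S := [set i | time tau i0 <= time tau i].
have sub : C \subset S.
  by apply/fintype.subsetP => i hi; rewrite inE; apply: hmin.
apply: leq_trans (leq_mul (subset_leq_card sub) (leqnn a)) _.
rewrite -sum_nat_const.
have hs := @seg_sum n phi S (fun x => dist1 (R x) (B (so x))).
apply: (leq_trans _ hs).
apply: leq_sum => x0 hx0; apply: hA.
have [_ hend hnot] := mS_spec (phi:=phi) hx0.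
set m := mS phi S x0 in hend hnot *.
apply: leq_trans (@path_bound _ _ R B sg so tau H m x0 (time tau i0) _ _ _); last first.
- by move=> b hb; have := hnot b hb; rewrite inE -ltnNge => /ltnW.
- by move: hend; rewrite inE.
- by move: hx0; rewrite inE.
have hi0' : i0 \in C by [].
move: hi0'; rewrite /C inE => /leq_trans; apply.
apply: (greedyP H); first by move: hx0; rewrite inE.
by rewrite -phiE -iterS; move: hend; rewrite inE.
Qed.

Lemma sum_ind n (A : {set 'I_n}) : \sum_(i < n) ((i \in A) : nat) = #|A|.
Proof.
rewrite -sum1_card [RHS]big_mkcond /=; apply: eq_bigr => i _.
by case: (i \in A).
Qed.

Lemma main_nat d n (R B : 'I_n -> cube d) (sg so tau : 'S_n)
  (H : greedy_spec R B sg tau) K :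
  (K + 1) * mweight R B sg <= ((K + 1) * K ^ 2 + d) * mweight R B so.
Proof.
set Wo := mweight R B so.
set C1 := [set i | 1 <= dist1 (R i) (B (sg i))].
set C2 := [set i | K ^ 2 + 1 <= dist1 (R i) (B (sg i))].
have c1 : #|C1| * 1 <= Wo.
  apply: (@count_bound _ _ R B sg so tau H 1 1) => A; case: A => //.
have c2 : #|C2| * (K + 1) <= Wo.
  apply: (@count_bound _ _ R B sg so tau H (K ^ 2 + 1) (K + 1)) => A hA.
  case: (leqP (K + 1) A) => // hA'.
  have : A ^ 2 <= K ^ 2 by rewrite leq_exp2r //; lia.
  lia.
have hW : mweight R B sg <= K ^ 2 * #|C1| + d * #|C2|.
  rewrite /mweight -!sum_ind !big_distrr -big_split /=.
  apply: leq_sum => i _; rewrite !inE.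
  have := @dist1_le _ (R i) (B (sg i)).
  set l := dist1 _ _.
  case: (leqP (K ^ 2 + 1) l) => h2; case: (leqP 1 l) => h1 /=; lia.
have e1 : (K + 1) * (K ^ 2 * #|C1|) <= (K + 1) * K ^ 2 * Wo.
  by rewrite mulnA leq_mul2l; apply/orP; right; lia.
have e2 : (K + 1) * (d * #|C2|) <= d * Wo.
  by rewrite mulnCA leq_mul2l; apply/orP; right; lia.
apply: leq_trans (leq_mul (leqnn (K + 1)) hW) _.
rewrite [X in X <= _]mulnDr [X in _ <= X]mulnDl; exact: leq_add e1 e2.
Qed.

Local Open Scope classical_set_scope.
Local Open Scope ring_scope.
Lemma powR12 (Rl : realType) (x : Rl) : 0 <= x -> (x `^ (1/12)) ^+ 12 = x.
Proof.
move=> hx; rewrite -powR_mulrn ?powR_ge0 // -powRrM.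
have -> : (1/12 : Rl) * 12%:R = 1 by field.
by rewrite powRr1.
Qed.

Lemma powR34 (Rl : realType) (x : Rl) : x `^ (3/4) = (x `^ (1/12)) ^+ 9.
Proof.
rewrite -powR_mulrn ?powR_ge0 // -powRrM.
by congr (_ `^ _); field.
Qed.

Definition yv (Rl : realType) (d : nat) : Rl := (d%:R : Rl) `^ (1/12).
Definition Kv (Rl : realType) (d : nat) : nat := Num.truncn (yv Rl d ^+ 4).
Definition fv (Rl : realType) (d : nat) : Rl :=
  ((Kv Rl d ^ 2)%:R + d%:R / (Kv Rl d + 1)%:R).

Lemma fK_bound (Rl : realType) (d : nat) : (0 < d)%N ->
  fv Rl d / (d%:R `^ (3/4)) <= 2 / yv Rl d.
Proof.
move=> hd; rewrite /fv; set y := yv Rl d; set K := Kv Rl d.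
have hy : 0 < y by apply: powR_gt0; rewrite ltr0n.
have hy12 : y ^+ 12 = d%:R by apply: powR12.
have hz : 0 <= y ^+ 4 by apply: exprn_ge0; apply: ltW.
have /andP[hk1 hk2] := truncn_itv hz.
rewrite -/K in hk1 hk2.
have hy9 : (d%:R : Rl) `^ (3/4) = y ^+ 9 by rewrite powR34.
rewrite hy9 -hy12 natrX natrD.
set k := K%:R in hk1 hk2 *.
have e12 : y ^+ 12 = (y ^+ 4) ^+ 3 by rewrite -exprM.
have e9 : y ^+ 9 = (y ^+ 4) ^+ 2 * y by rewrite -exprM -exprSr.
rewrite e12 e9.
set z := y ^+ 4 in hz hk1 hk2 *.
have hk0 : 0 <= k by rewrite /k ler0n.
have hk1' : 0 < k + 1 by lra.
have hz0 : 0 < z by rewrite /z exprn_gt0.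
have h1 : z ^+ 3 / (k + 1) <= z ^+ 2.
  rewrite ler_pdivrMr //; nra.
rewrite ler_pdivrMr; last by rewrite mulr_gt0 // exprn_gt0.
have -> : 2 / y * (z ^+ 2 * y) = 2 * z ^+ 2 by field; lra.
have : k ^+ 2 <= z ^+ 2 by nra.
lra.
Qed.

Lemma fv_ge0 (Rl : realType) d : 0 <= fv Rl d.
Proof. by rewrite /fv addr_ge0 // divr_ge0. Qed.

Lemma fv_cvg (Rl : realType) :
  (fun d : nat => fv Rl d / (d%:R `^ (3 / 4 : Rl))) @ \oo --> (0 : Rl).
Proof.
apply/cvgrPdist_lt => eps heps.
have he : 0 <= 2 / eps by rewrite divr_ge0 // ltW.
set N := (Num.truncn ((2 / eps) ^+ 12)).+1.
exists N => // d /= hd.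
have hd0 : (0 < d)%N by apply: leq_trans hd.
have hy : 0 < yv Rl d by apply: powR_gt0; rewrite ltr0n.
have hy12 : yv Rl d ^+ 12 = d%:R by apply: powR12.
have hN : (2 / eps) ^+ 12 < d%:R.
  have /andP[_ h] := truncn_itv (exprn_ge0 12 he).
  by apply: (lt_le_trans h); rewrite ler_nat.
have hlt : 2 / eps < yv Rl d.
  rewrite ltNge; apply/negP => hle.
  have : yv Rl d ^+ 12 <= (2 / eps) ^+ 12.
    by apply: lerXn2r => //; rewrite nnegrE ltW.
  by rewrite hy12 leNgt hN.
have hb := @fK_bound Rl d hd0.
rewrite sub0r normrN ger0_norm; last by rewrite divr_ge0 ?fv_ge0 ?powR_ge0.
apply: (le_lt_trans hb).
rewrite ltr_pdivrMr // mulrC -ltr_pdivrMr //.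
Qed.

Theorem corollary1 (Rl : realType) :
  exists f : nat -> Rl,
    (fun d : nat => f d / (d%:R `^ (3 / 4 : Rl))) @ \oo --> (0 : Rl) /\
    forall (d n : nat) (R B : 'I_n -> cube d) (sg so : 'S_n),
      bounded_instance (d%:R `^ (3 / 4 : Rl)) (d%:R `^ (3 / 4 : Rl)) R B ->
      is_greedy_matching R B sg ->
      is_min_matching R B so ->
      (mweight R B sg)%:R <= f d * (mweight R B so)%:R.
Proof.
exists (fv Rl); split; first exact: fv_cvg.
move=> d n R B sg so _ [tau H] _.
have hm := @main_nat d n R B sg so tau H (Kv Rl d).
set K := Kv Rl d in hm *.
set Wg := mweight R B sg in hm *; set Wo := mweight R B so in hm *.
have hK : 0 < (K + 1)%:R :> Rl by rewrite ltr0n addn1.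
rewrite -(ler_pM2l hK).
have e : (K + 1)%:R * (fv Rl d * Wo%:R) = ((K + 1) * K ^ 2 + d)%:R * Wo%:R :> Rl.
  rewrite /fv -/K !(natrD, natrM).
  by field; rewrite -[1]/(1%:R) -natrD pnatr_eq0 addn1.
rewrite e -!natrM ler_nat; exact: hm.
Qed.
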